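(* Let $(J,R,\sigma)$ be a generalized complex structure of type $1$ on a real $4$-dimensional unimodular Lie algebra $\mathfrak g$. Then there exist a basis $(e_1,e_2,e_3,e_4)$ of $\mathfrak g$ and $\lambda\in\mathbb R$ such that $J=\lambda(E_{11}+E_{22})+E_{34}-E_{43}$, $R=e_{12}^\#$, $\sigma=(1+\lambda^2)e^{12}_\#$, and the nonvanishing Lie brackets have one of the following forms (all parameters real): $\mathfrak U_1$: $[e_1,e_2]=e_1$, $[e_2,e_3]=\tfrac12e_3-ye_4-q_1e_1$, $[e_2,e_4]=ye_3+\tfrac12e_4-q_2e_1$; $\mathfrak U_2$: $[e_3,e_4]=b_1e_1+b_2e_2$, $[e_2,e_3]=-ye_4-q_1e_1$, $[e_2,e_4]=ye_3-q_2e_1$; $\mathfrak U_3$: $[e_3,e_4]=b_1e_1+b_2e_2$, $[e_4,e_1]=pe_1+re_2$, $[e_4,e_2]=qe_1-pe_2$, with $|p^2+qr|\in\{0,1\}$.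
   Context: Let $\mathfrak g$ be a real finite-dimensional Lie algebra, $\Phi(\mathfrak g)=\mathfrak g\oplus\mathfrak g^*$ with the neutral pairing $\langle u+\alpha,v+\beta\rangle=\tfrac12(\alpha(v)+\beta(u))$ and the bracket $[u+\alpha,v+\beta]=[u,v]+\mathrm{ad}_u^t\beta-\mathrm{ad}_v^t\alpha$, where $(\mathrm{ad}_u^t\alpha)(v)=-\alpha([u,v])$. A generalized complex structure on $\mathfrak g$ is an endomorphism $K$ of $\Phi(\mathfrak g)$ with $K^2=-\mathrm{Id}$, $\langle Ka,b\rangle+\langle a,Kb\rangle=0$ for all $a,b$, and vanishing Nijenhuis torsion $N_K(a,b)=[Ka,Kb]-K[Ka,b]-K[a,Kb]+K^2[a,b]$. Writing $K=\begin{pmatrix}J&R\\ \sigma&-J^*\end{pmatrix}$ with skew-symmetric $R:\mathfrak g^*\to\mathfrak g$, $\sigma:\mathfrak g\to\mathfrak g^*$, the triple $(J,R,\sigma)$ is called a generalized complex structure on $\mathfrak g$; in dimension 4 it is of type $1$ if $\operatorname{rank}R=2$. A Lie algebra is unimodular if $\operatorname{tr}\mathrm{ad}_u=0$ for all $u$. Notation: $E_{ij}$ sends $e_j$ to $e_i$ and kills $e_k$, $k\neq j$; for $\pi\in\wedge^2\mathfrak g$, $\pi^\#:\mathfrak g^*\to\mathfrak g$ is $\beta(\pi^\#\alpha)=\pi(\alpha,\beta)$; for $\omega\in\wedge^2\mathfrak g^*$, $\omega_\#(u)=i_u\omega$; $e_{12}^\#=(e_1\wedge e_2)^\#$, $e^{12}_\#=(e^1\wedge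 e^2)_\#$ with $(e^i)$ the dual basis. *)

(* Defs.v *)
From HB Require Import structures.
From mathcomp Require Import all_boot all_order all_algebra.
From mathcomp Require Import reals.
Set Implicit Arguments. Unset Strict Implicit. Unset Printing Implicit Defensive.
Import Order.TTheory GRing.Theory Num.Theory.
Local Open Scope ring_scope.

(* Model: g = R^4 (row vectors 'rV_4) with an arbitrary Lie bracket br;
   g^* is also modelled by 'rV_4 with the pairing  alpha(u) = sum_i alpha_i u_i.
   Linear maps are matrices acting on the right: u |-> u *m M. *)

Section Defs.
Variable R : realType.
Notation V := 'rV[R]_4.

Definition pair (alpha u : V) : R := \sum_(i < 4) alpha 0 i * u 0 i.

Definition is_lie_bracket (br : V -> V -> V) : Prop :=
  [/\ (forall (a : R) u v w, br (a *: u + v) w = a *: br u w + br v w),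
      (forall u v, br u v = - br v u) &
      (forall u v w, br u (br v w) + br v (br w u) + br w (br u v) = 0)].

(* the matrix of ad_u (row convention: v *m adm br u = br u v) *)
Definition adm (br : V -> V -> V) (u : V) : 'M[R]_4 :=
  \matrix_(i, j) (br u (delta_mx 0 i)) 0 j.

Definition unimodular (br : V -> V -> V) : Prop :=
  forall u, \tr (adm br u) = 0.

Definition adt (br : V -> V -> V) (u alpha : V) : V :=
  \row_j (- pair alpha (br u (delta_mx 0 j))).

(* Phi(g) = g (+) g^*  as pairs (u, alpha) *)
Definition Phi := (V * V)%type.
Definition padd (a b : Phi) : Phi := (a.1 + b.1, a.2 + b.2).
Definition popp (a : Phi) : Phi := (- a.1, - a.2).
Definition pzero : Phi := (0, 0).

Definition Phi_pairing (a b : Phi) : R :=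
  2^-1 * (pair a.2 b.1 + pair b.2 a.1).

Definition Phi_bracket (br : V -> V -> V) (a b : Phi) : Phi :=
  (br a.1 b.1, adt br a.1 b.2 - adt br b.1 a.2).

(* dual map J^* : (J^* alpha)(u) = alpha(J u) *)
Definition dualmx (J : 'M[R]_4) (alpha : V) : V := alpha *m J^T.

(* K = ( J  R ; sigma  -J^* ) *)
Definition Kmap (J Rm S : 'M[R]_4) (a : Phi) : Phi :=
  (a.1 *m J + a.2 *m Rm, a.1 *m S - dualmx J a.2).

Definition nijenhuis (br : V -> V -> V) (K : Phi -> Phi) (a b : Phi) : Phi :=
  let B := Phi_bracket br in
  padd (padd (padd (B (K a) (K b)) (popp (K (B (K a) b))))
             (popp (K (B a (K b)))))
       (K (K (B a b))).

Definition gen_complex (br : V -> V -> V) (K : Phi -> Phi) : Prop :=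
  [/\ (forall a, K (K a) = popp a),
      (forall a b, Phi_pairing (K a) b + Phi_pairing a (K b) = 0) &
      (forall a b, nijenhuis br K a b = pzero)].

Definition gc_triple (br : V -> V -> V) (J Rm S : 'M[R]_4) : Prop :=
  gen_complex br (Kmap J Rm S).

(* type 1 in dimension 4: rank R = 2 *)
Definition gc_type1 (Rm : 'M[R]_4) : Prop := \rank Rm = 2%N.

Definition brackets (br : V -> V -> V) (e1 e2 e3 e4 : V)
  (c12 c13 c14 c23 c24 c34 : V) : Prop :=
  [/\ br e1 e2 = c12, br e1 e3 = c13, br e1 e4 = c14 &
      [/\ br e2 e3 = c23, br e2 e4 = c24 & br e3 e4 = c34]].

End Defs.

Definition o1 : 'I_4 := @Ordinal 4 0 isT.
Definition o2 : 'I_4 := @Ordinal 4 1 isT.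
Definition o3 : 'I_4 := @Ordinal 4 2 isT.
Definition o4 : 'I_4 := @Ordinal 4 3 isT.

(* Main.v *)
Require Import Defs.
From HB Require Import structures.
From mathcomp Require Import all_boot all_order all_algebra.
From mathcomp Require Import reals.
From mathcomp Require Import ring lra.
Import Order.TTheory GRing.Theory Num.Theory.
Local Open Scope ring_scope.

Module Aux.
Set Implicit Arguments. Unset Strict Implicit. Unset Printing Implicit Defensive.


Section Basics.
Variable R : realType.
Notation V := 'rV[R]_4.
Implicit Types (br : V -> V -> V) (u v w alpha beta : V) (P J Rm S : 'M[R]_4).

Lemma sum4 (T : nmodType) (F : 'I_4 -> T) :
  \sum_(i < 4) F i = F o1 + F o2 + F o3 + F o4.
Proof.
rewrite !big_ord_recr big_ord0 /= add0r.
congr (_ + _ + _ + _); by apply: congr1; apply/val_inj.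
Qed.

Lemma pairE alpha u : pair alpha u = (u *m alpha^T) 0 0.
Proof. by rewrite /pair mxE; apply: eq_bigr => i _; rewrite mxE mulrC. Qed.

Lemma pairC_tr alpha u : pair alpha u = (alpha *m u^T) 0 0.
Proof. by rewrite /pair mxE; apply: eq_bigr => i _; rewrite mxE. Qed.

Lemma pair_mulmx alpha u (A : 'M[R]_4) :
  pair (alpha *m A) u = pair alpha (u *m A^T).
Proof. by rewrite !pairC_tr trmx_mul trmxK mulmxA. Qed.

Lemma pairDl a b u : pair (a + b) u = pair a u + pair b u.
Proof. by rewrite /pair -big_split; apply: eq_bigr => i _; rewrite mxE mulrDl. Qed.
Lemma pairDr a u v : pair a (u + v) = pair a u + pair a v.
Proof. by rewrite /pair -big_split; apply: eq_bigr => i _; rewrite mxE mulrDr. Qed.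
Lemma pairZl (c : R) a u : pair (c *: a) u = c * pair a u.
Proof. by rewrite /pair mulr_sumr; apply: eq_bigr => i _; rewrite mxE mulrA. Qed.
Lemma pairZr (c : R) a u : pair a (c *: u) = c * pair a u.
Proof. by rewrite /pair mulr_sumr; apply: eq_bigr => i _; rewrite mxE mulrCA. Qed.
Lemma pair0l u : pair 0 u = 0.
Proof. by rewrite /pair big1 // => i _; rewrite mxE mul0r. Qed.
Lemma pair0r u : pair u 0 = 0.
Proof. by rewrite /pair big1 // => i _; rewrite mxE mulr0. Qed.
Lemma pairNl a u : pair (- a) u = - pair a u.
Proof. by rewrite -scaleN1r pairZl mulN1r. Qed.
Lemma pairNr a u : pair a (- u) = - pair a u.
Proof. by rewrite -scaleN1r pairZr mulN1r. Qed.
Lemma pairBl a b u : pair (a - b) u = pair a u - pair b u.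
Proof. by rewrite pairDl pairNl. Qed.
Lemma pairBr a u v : pair a (u - v) = pair a u - pair a v.
Proof. by rewrite pairDr pairNr. Qed.

Lemma mx_ext (A B : 'M[R]_4) : (forall u : V, u *m A = u *m B) -> A = B.
Proof.
move=> H; apply/row_matrixP => i.
by rewrite -[A]mul1mx -[B]mul1mx !row_mul H.
Qed.

Section Lin.
Variable br : V -> V -> V.
Hypothesis Hl : is_lie_bracket br.

Lemma brDl u v w : br (u + v) w = br u w + br v w.
Proof. by have [H _ _] := Hl; have := H 1 u v w; rewrite !scale1r. Qed.
Lemma br0l w : br 0 w = 0.
Proof. have [H _ _] := Hl; have E := H 1 0 0 w; rewrite !scale1r addr0 in E.
by apply: (addrI (br 0 w)); rewrite addr0 -E. Qed.
Lemma brZl (a : R) u w : br (a *: u) w = a *: br u w.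
Proof. by have [H _ _] := Hl; have := H a u 0 w; rewrite !addr0 br0l addr0. Qed.
Lemma brC u v : br u v = - br v u.
Proof. by have [_ H _] := Hl. Qed.
Lemma brDr u v w : br w (u + v) = br w u + br w v.
Proof. by rewrite brC brDl opprD -!brC. Qed.
Lemma brZr (a : R) u w : br w (a *: u) = a *: br w u.
Proof. by rewrite brC brZl -scalerN -brC. Qed.
Lemma br0r w : br w 0 = 0.
Proof. by rewrite brC br0l oppr0. Qed.
Lemma brNl u w : br (- u) w = - br u w.
Proof. by rewrite -scaleN1r brZl scaleN1r. Qed.
Lemma brNr u w : br w (- u) = - br w u.
Proof. by rewrite -scaleN1r brZr scaleN1r. Qed.
Lemma brBl u v w : br (u - v) w = br u w - br v w.
Proof. by rewrite brDl brNl. Qed.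
Lemma brBr u v w : br w (u - v) = br w u - br w v.
Proof. by rewrite brDr brNr. Qed.
Lemma brsumr (I : finType) (F : I -> V) w :
  br w (\sum_i F i) = \sum_i br w (F i).
Proof.
apply: (big_ind2 (fun x y => br w x = y)); first exact: br0r.
  by move=> x1 x2 y1 y2 <- <-; rewrite brDr.
by [].
Qed.
Lemma brsuml (I : finType) (F : I -> V) w :
  br (\sum_i F i) w = \sum_i br (F i) w.
Proof.
apply: (big_ind2 (fun x y => br x w = y)); first exact: br0l.
  by move=> x1 x2 y1 y2 <- <-; rewrite brDl.
by [].
Qed.
Lemma brii u : br u u = 0.
Proof.
have H := brC u u.
have : (2:R) *: br u u = 0 by rewrite scaler_nat mulr2n {1}H addNr.
by move/eqP; rewrite scaler_eq0 pnatr_eq0 /= => /eqP.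
Qed.

Lemma adm_mul u v : v *m adm br u = br u v.
Proof.
rewrite {2}(row_sum_delta v) brsumr; apply/rowP => j.
rewrite !mxE summxE; apply: eq_bigr => i _; rewrite !mxE brZr mxE //.
Qed.
End Lin.

Lemma adt_adm br u alpha : adt br u alpha = - (alpha *m (adm br u)^T).
Proof.
apply/rowP => j; rewrite !mxE; congr (- _); rewrite /pair.
by apply: eq_bigr => i _; rewrite !mxE.
Qed.

Definition tbr P br : V -> V -> V := fun x y => br (x *m P) (y *m P) *m invmx P.

Section Transport.
Variables (P : 'M[R]_4) (br : V -> V -> V).
Hypothesis HP : P \in unitmx.
Hypothesis Hl : is_lie_bracket br.

Lemma tbr_lie : is_lie_bracket (tbr P br).
Proof.
have [H1 H2 H3] := Hl; split.
- by move=> a u v w; rewrite /tbr mulmxDl -scalemxAl (brDl Hl) brZl // mulmxDl scalemxAl.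
- by move=> u v; rewrite /tbr H2 mulNmx.
- move=> u v w; rewrite /tbr !mulmxKV // -!mulmxDl H3 mul0mx //.
Qed.

Lemma adm_tbr x : adm (tbr P br) x = P *m adm br (x *m P) *m invmx P.
Proof.
apply/row_matrixP => i; rewrite !row_mul.
have -> : row i P = delta_mx 0 i *m P by rewrite -rowE.
rewrite (adm_mul Hl).
apply/rowP => j; rewrite !mxE /tbr //.
Qed.

Lemma tbr_unimod : unimodular br -> unimodular (tbr P br).
Proof.
move=> Hu x; rewrite adm_tbr mxtrace_mulC mulmxA mulVmx // mul1mx; exact: Hu.
Qed.

Definition Tphi (a : Phi R) : Phi R := (a.1 *m invmx P, a.2 *m P^T).
Definition Tinv (a : Phi R) : Phi R := (a.1 *m P, a.2 *m (invmx P)^T).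

Lemma TTinv a : Tphi (Tinv a) = a.
Proof.
case: a => u al; rewrite /Tphi /Tinv /= mulmxK // -mulmxA -trmx_mul mulmxV //.
by rewrite trmx1 mulmx1.
Qed.

Lemma Tphi_padd a b : Tphi (padd a b) = padd (Tphi a) (Tphi b).
Proof. by rewrite /Tphi /padd /= !mulmxDl. Qed.
Lemma Tphi_popp a : Tphi (popp a) = popp (Tphi a).
Proof. by rewrite /Tphi /popp /= !mulNmx. Qed.
Lemma Tphi_pzero : Tphi (pzero R) = pzero R.
Proof. by rewrite /Tphi /pzero /= !mul0mx. Qed.

Lemma Tphi_bracket a b :
  Phi_bracket (tbr P br) (Tphi a) (Tphi b) = Tphi (Phi_bracket br a b).
Proof.
case: a b => u al [v be]; rewrite /Phi_bracket /Tphi /=.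
congr (_, _); first by rewrite /tbr !mulmxKV.
have E1 : P^T *m (invmx P)^T = 1%:M by rewrite -trmx_mul mulVmx // trmx1.
rewrite !adt_adm !adm_tbr !mulmxKV // mulmxBl !mulNmx; congr (- _ - - _).
- by rewrite !trmx_mul !mulmxA -[_ *m P^T *m (invmx P)^T]mulmxA E1 mulmx1.
- by rewrite !trmx_mul !mulmxA -[_ *m P^T *m (invmx P)^T]mulmxA E1 mulmx1.
Qed.

Lemma Tphi_K J Rm S a :
  Kmap (P *m J *m invmx P) ((invmx P)^T *m Rm *m invmx P) (P *m S *m P^T) (Tphi a)
  = Tphi (Kmap J Rm S a).
Proof.
case: a => u al; rewrite /Kmap /Tphi /dualmx /=.
have E1 : P^T *m (invmx P)^T = 1%:M by rewrite -trmx_mul mulVmx // trmx1.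
congr (_, _).
- rewrite mulmxDl !mulmxA mulmxKV // -[al *m P^T *m _]mulmxA E1 mulmx1 //.
- rewrite mulmxBl !mulmxA mulmxKV //; congr (_ - _).
  by rewrite !trmx_mul !mulmxA -[al *m P^T *m _]mulmxA E1 mulmx1.
Qed.

Lemma Tphi_nij J Rm S a b :
  nijenhuis (tbr P br) (Kmap (P *m J *m invmx P) ((invmx P)^T *m Rm *m invmx P) (P *m S *m P^T))
     (Tphi a) (Tphi b) = Tphi (nijenhuis br (Kmap J Rm S) a b).
Proof.
rewrite /nijenhuis; cbv zeta.
by do 4 rewrite ?Tphi_K ?Tphi_bracket; rewrite !Tphi_padd !Tphi_popp.
Qed.

End Transport.
End Basics.


Section B.
Variable R : realType.
Notation V := 'rV[R]_4.

Definition Hyp (br : V -> V -> V) (J Rm S : 'M[R]_4) : Prop :=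
  [/\ is_lie_bracket br, unimodular br &
      forall a b, nijenhuis br (Kmap J Rm S) a b = pzero R].

Definition Concl (br : V -> V -> V) (J Rm S : 'M[R]_4) : Prop :=
  exists (P : 'M[R]_4) (f : 'I_4 -> 'rV[R]_4) (lam : R),
    let e1 := row o1 P in let e2 := row o2 P in
    let e3 := row o3 P in let e4 := row o4 P in
    [/\ P \in unitmx /\
        (forall i j, pair (f i) (row j P) = (i == j)%:R),
        [/\ e1 *m J = lam *: e1, e2 *m J = lam *: e2,
            e3 *m J = - e4 & e4 *m J = e3],
        (forall alpha, alpha *m Rm = pair alpha e1 *: e2 - pair alpha e2 *: e1),
        (forall u, u *m S =
           (1 + lam ^+ 2) *: (pair (f o1) u *: f o2 - pair (f o2) u *: f o1)) &
        [\/ exists y q1 q2 : R,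
              brackets br e1 e2 e3 e4 e1 0 0
                (2^-1 *: e3 - y *: e4 - q1 *: e1)
                (y *: e3 + 2^-1 *: e4 - q2 *: e1) 0,
            exists y q1 q2 b1 b2 : R,
              brackets br e1 e2 e3 e4 0 0 0
                (- (y *: e4) - q1 *: e1)
                (y *: e3 - q2 *: e1)
                (b1 *: e1 + b2 *: e2)
          | exists b1 b2 p q r : R,
              [/\ brackets br e1 e2 e3 e4 0 0
                    (- (p *: e1 + r *: e2)) 0
                    (- (q *: e1 - p *: e2))
                    (b1 *: e1 + b2 *: e2)
                & (`|p ^+ 2 + q * r| == 0) || (`|p ^+ 2 + q * r| == 1)]]].

Section T.
Variables (P : 'M[R]_4) (br : V -> V -> V) (J Rm S : 'M[R]_4).
Hypothesis HP : P \in unitmx.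

Lemma Hyp_transport : Hyp br J Rm S ->
  Hyp (tbr P br) (P *m J *m invmx P) ((invmx P)^T *m Rm *m invmx P) (P *m S *m P^T).
Proof.
case=> Hl Hu HN; split; [exact: tbr_lie | exact: tbr_unimod |].
move=> x y; rewrite -(TTinv HP x) -(TTinv HP y) Tphi_nij // HN.
exact: Tphi_pzero.
Qed.

Lemma brackets_mul (br' : V -> V -> V) e1 e2 e3 e4 c12 c13 c14 c23 c24 c34 :
  (forall x y, br (x *m P) (y *m P) = br' x y *m P) ->
  brackets br' e1 e2 e3 e4 c12 c13 c14 c23 c24 c34 ->
  brackets br (e1 *m P) (e2 *m P) (e3 *m P) (e4 *m P)
    (c12 *m P) (c13 *m P) (c14 *m P) (c23 *m P) (c24 *m P) (c34 *m P).
Proof.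
move=> Hb [E12 E13 E14 [E23 E24 E34]].
by split; [ | | | split ]; rewrite Hb ?E12 ?E13 ?E14 ?E23 ?E24 ?E34.
Qed.

Lemma Concl_transport : is_lie_bracket br ->
  Concl (tbr P br) (P *m J *m invmx P) ((invmx P)^T *m Rm *m invmx P) (P *m S *m P^T) ->
  Concl br J Rm S.
Proof.
move=> Hl [P1 [f [lam]]] /=.
case=> [[HP1 Hf] [EJ1 EJ2 EJ3 EJ4] ER ES Hbr].
have Hb x y : br (x *m P) (y *m P) = tbr P br x y *m P by rewrite /tbr mulmxKV.
exists (P1 *m P), (fun i => f i *m (invmx P)^T), lam => /=.
have rowM i : row i (P1 *m P) = row i P1 *m P by rewrite row_mul.
have E1 : P^T *m (invmx P)^T = 1%:M by rewrite -trmx_mul mulVmx // trmx1.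
have pM a x : pair (a *m (invmx P)^T) (x *m P) = pair a x.
  by rewrite pair_mulmx trmxK mulmxK.
have JM x : x *m P *m J = x *m (P *m J *m invmx P) *m P.
  by rewrite !mulmxA mulmxKV.
rewrite !rowM; split.
- split; first by rewrite unitmx_mul HP1 HP.
  by move=> i j; rewrite rowM pM Hf.
- by split; rewrite JM ?EJ1 ?EJ2 ?EJ3 ?EJ4 ?scalemxAl ?mulNmx.
- move=> al.
  have -> : al *m Rm = (al *m P^T) *m ((invmx P)^T *m Rm *m invmx P) *m P.
    by rewrite !mulmxA mulmxKV // -(mulmxA al) E1 mulmx1.
  by rewrite ER mulmxBl !scalemxAl !pair_mulmx !trmxK.
- move=> u.
  have -> : u *m S = u *m invmx P *m (P *m S *m P^T) *m (invmx P)^T.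
    by rewrite !mulmxA mulmxKV // -[u *m S *m P^T *m _]mulmxA E1 mulmx1.
  by rewrite ES -scalemxAl mulmxBl -!scalemxAl !pair_mulmx !trmxK.
- case: Hbr => [[y [q1 [q2 H]]]|[y [q1 [q2 [b1 [b2 H]]]]]|[b1 [b2 [p [q [r [H Hpq]]]]]]].
  + apply: Or31; exists y, q1, q2.
    case: (brackets_mul Hb H) => A1 A2 A3 [A4 A5 A6]; split; [ | | | split ]; rewrite ?A1 ?A2 ?A3 ?A4 ?A5 ?A6; do 3 rewrite ?mul0mx ?mulmxDl ?mulNmx; rewrite -?scalemxAl; reflexivity.
  + apply: Or32; exists y, q1, q2, b1, b2.
    case: (brackets_mul Hb H) => A1 A2 A3 [A4 A5 A6]; split; [ | | | split ]; rewrite ?A1 ?A2 ?A3 ?A4 ?A5 ?A6; do 3 rewrite ?mul0mx ?mulmxDl ?mulNmx; rewrite -?scalemxAl; reflexivity.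
  + apply: Or33; exists b1, b2, p, q, r; split => //.
    case: (brackets_mul Hb H) => A1 A2 A3 [A4 A5 A6]; split; [ | | | split ]; rewrite ?A1 ?A2 ?A3 ?A4 ?A5 ?A6; do 3 rewrite ?mul0mx ?mulmxDl ?mulNmx; rewrite -?scalemxAl; reflexivity.
Qed.
End T.
End B.


Section C.
Variable R : realType.
Notation V := 'rV[R]_4.

Definition Nm (l : R) : 'M[R]_4 := \matrix_(i, j)
  match val i, val j with
  | 0%N, 0%N => l | 1%N, 1%N => l | 2%N, 3%N => -1 | 3%N, 2%N => 1 | _, _ => 0 end.
Definition R0m : 'M[R]_4 := \matrix_(i, j)
  match val i, val j with
  | 0%N, 1%N => 1 | 1%N, 0%N => -1 | _, _ => 0 end.
Definition S0m (l : R) : 'M[R]_4 := \matrix_(i, j)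
  match val i, val j with
  | 0%N, 1%N => 1 + l ^+ 2 | 1%N, 0%N => - (1 + l ^+ 2) | _, _ => 0 end.

Lemma pair_delta j (v : V) : pair (delta_mx 0 j) v = v 0 j.
Proof.
rewrite /pair (bigD1 j) //= big1 ?addr0; first by rewrite mxE !eqxx mul1r.
by move=> k nk; rewrite mxE eqxx (negbTE nk) mul0r.
Qed.

Lemma pair_trR alpha u (A : 'M[R]_4) : pair (alpha *m A^T) u = pair alpha (u *m A).
Proof. by rewrite pair_mulmx trmxK. Qed.

Lemma rowsum4 (u : V) (A : 'M[R]_4) :
  u *m A = u 0 o1 *: row o1 A + u 0 o2 *: row o2 A + u 0 o3 *: row o3 A + u 0 o4 *: row o4 A.
Proof. by rewrite mulmx_sum_row sum4. Qed.

Lemma row4_eq (u w : V) : u 0 o1 = w 0 o1 -> u 0 o2 = w 0 o2 ->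
  u 0 o3 = w 0 o3 -> u 0 o4 = w 0 o4 -> u = w.
Proof.
move=> h1 h2 h3 h4; apply/rowP => k; case: k => [[|[|[|[|//]]]] Hk].
- by rewrite (_ : Ordinal Hk = o1) //; apply/val_inj.
- by rewrite (_ : Ordinal Hk = o2) //; apply/val_inj.
- by rewrite (_ : Ordinal Hk = o3) //; apply/val_inj.
- by rewrite (_ : Ordinal Hk = o4) //; apply/val_inj.
Qed.

Lemma mx4_eq (A B : 'M[R]_4) : row o1 A = row o1 B -> row o2 A = row o2 B ->
  row o3 A = row o3 B -> row o4 A = row o4 B -> A = B.
Proof.
move=> h1 h2 h3 h4; apply/row_matrixP => k; case: k => [[|[|[|[|//]]]] Hk].
- by rewrite (_ : Ordinal Hk = o1) //; apply/val_inj.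
- by rewrite (_ : Ordinal Hk = o2) //; apply/val_inj.
- by rewrite (_ : Ordinal Hk = o3) //; apply/val_inj.
- by rewrite (_ : Ordinal Hk = o4) //; apply/val_inj.
Qed.

Lemma nz_coord (u : V) : u != 0 -> exists k, u 0 k != 0.
Proof.
move=> nz; case: (boolP [exists k, u 0 k != 0]) => [/existsP [k Hk]|/existsPn H].
  by exists k.
by case/negP: nz; apply/eqP/rowP => k; rewrite mxE; apply/eqP; move: (H k); rewrite negbK.
Qed.

Lemma coord_trP (al : V) (A : 'M[R]_4) n : (al *m A^T) 0 n = pair al (row n A).
Proof. by rewrite !mxE /pair; apply: eq_bigr => k _; rewrite !mxE. Qed.

Lemma entry_PSPt (P S : 'M[R]_4) a b :
  (P *m S *m P^T) a b = pair (row a P *m S) (row b P).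
Proof. by rewrite -row_mul mxE /pair; apply: eq_bigr => k _; rewrite !mxE. Qed.

Lemma rowij (A : 'M[R]_4) i j : row i A 0 j = A i j.
Proof. by rewrite mxE. Qed.

Lemma R0m_row (u : V) : u *m R0m = u 0 o1 *: delta_mx 0 o2 - u 0 o2 *: delta_mx 0 o1.
Proof. by apply: row4_eq; rewrite !mxE sum4 !mxE /=; ring. Qed.

Section NF.
Variables (J Rm S : 'M[R]_4).
Hypothesis V1 : forall u : V, u *m J *m J + u *m S *m Rm = - u.
Hypothesis V2 : forall u : V, u *m J *m S = u *m S *m J^T.
Hypothesis V3 : forall al : V, al *m Rm *m J = al *m J^T *m Rm.
Hypothesis SkR : forall al be : V, pair be (al *m Rm) + pair al (be *m Rm) = 0.
Hypothesis SkS : forall u v : V, pair (u *m S) v + pair (v *m S) u = 0.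
Hypothesis Hrank : \rank Rm = 2%N.

Lemma SkR0 al : pair al (al *m Rm) = 0.
Proof.
have := SkR al al; rewrite -mulr2n => /eqP; rewrite mulrn_eq0 /= => /eqP //.
Qed.
Lemma SkS0 u : pair (u *m S) u = 0.
Proof.
have := SkS u u; rewrite -mulr2n => /eqP; rewrite mulrn_eq0 /= => /eqP //.
Qed.

Lemma Rm_nz : exists i j, Rm i j != 0.
Proof.
case: (boolP [exists i, [exists j, Rm i j != 0]]) => [/existsP [i /existsP [j H]]|/negP H].
  by exists i, j.
exfalso; have Rm0 : Rm = 0.
  apply/matrixP => i j; rewrite mxE; apply/eqP/negPn/negP => nz.
  by apply: H; apply/existsP; exists i; apply/existsP; exists j.
by move: Hrank; rewrite Rm0 mxrank0.
Qed.

Lemma nf_main : exists (P : 'M[R]_4) (l : R), [/\ P \in unitmx,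
  P *m J = Nm l *m P, Rm = P^T *m R0m *m P & P *m S *m P^T = S0m l].
Proof.
have [i [j Hij]] := Rm_nz.
pose a1 : V := (Rm i j)^-1 *: delta_mx 0 i.
pose a2 : V := delta_mx 0 j.
pose e2 := a1 *m Rm.
pose e1 := - (a2 *m Rm).
have r12 : pair a2 (a1 *m Rm) = 1.
  by rewrite pair_delta -scalemxAl mxE -rowE mxE mulVf.
clearbody a1 a2.
have p11 : pair a1 e1 = 1.
  by have := SkR a1 a2; rewrite r12 => H; rewrite /e1 pairNr; apply/eqP; rewrite eq_sym -addr_eq0 H.
have p21 : pair a2 e1 = 0 by rewrite /e1 pairNr SkR0 oppr0.
have p12 : pair a1 e2 = 0 by rewrite /e2 SkR0.
have p22 : pair a2 e2 = 1 by [].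
have RF : forall al : V, al *m Rm = pair al e1 *: e2 - pair al e2 *: e1.
  move=> al.
  pose k := al - pair al e1 *: a1 - pair al e2 *: a2.
  have kR : k *m Rm = al *m Rm - (pair al e1 *: e2 - pair al e2 *: e1).
    by rewrite /k !mulmxBl -(scalemxAl (pair al e1)) -(scalemxAl (pair al e2)) /e1 scalerN opprK opprD addrA.
  have pk1 : pair k e1 = 0 by rewrite /k !pairBl !pairZl p11 p21; ring.
  have pk2 : pair k e2 = 0 by rewrite /k !pairBl !pairZl p12 p22; ring.
  have w1 : pair a1 (k *m Rm) = 0.
    by have := SkR k a1; rewrite -/e2 pk2 addr0.
  have w2 : pair a2 (k *m Rm) = 0.
    have h : pair k (a2 *m Rm) = 0 by rewrite -[a2 *m Rm]opprK -/e1 pairNr pk1 oppr0.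
    by have := SkR k a2; rewrite h addr0.
  pose E : 'M[R]_(2, 4) := \matrix_(r, m) (if r == 0 then e1 else e2) 0 m.
  pose A : 'M[R]_(4, 2) := \matrix_(m, r) (if r == 0 then a1 else a2) 0 m.
  have EA : E *m A = 1%:M.
    apply/matrixP => r t.
    have -> : (E *m A) r t = pair (if t == 0 then a1 else a2) (if r == 0 then e1 else e2).
      by rewrite !mxE /pair; apply: eq_bigr => m _; rewrite !mxE mulrC.
    by case: r => [[|[|//]] ?]; case: t => [[|[|//]] ?]; rewrite !mxE /=.
  have rankE : \rank E = 2%N.
    apply/eqP; rewrite eqn_leq rank_leq_row /=.
    by have := mxrankM_maxl E A; rewrite EA mxrank1.
  have sER : (E <= Rm)%MS.
    apply/row_subP => r.
    have -> : row r E = if r == 0 then e1 else e2 by apply/rowP => m; rewrite !mxE; case: (r == 0).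
    by case: (r == 0); rewrite ?/e1 -?mulNmx submxMl.
  have sRE : (Rm <= E)%MS.
    have H := (mxrank_leqif_sup sER).2; rewrite rankE Hrank eqxx in H.
    by rewrite -H.
  have /submxP [D HD] : (k *m Rm <= E)%MS by apply: submx_trans (submxMl k Rm) sRE.
  have wA : k *m Rm *m A = 0.
    apply/rowP => t; rewrite !mxE.
    have -> : \sum_j (k *m Rm) 0 j * A j t = pair (if t == 0 then a1 else a2) (k *m Rm).
      by rewrite /pair; apply: eq_bigr => m _; rewrite !mxE mulrC.
    by case: (t == 0).
  have D0 : D = 0 by move: wA; rewrite HD -mulmxA EA mulmx1.
  apply/eqP; rewrite -subr_eq0 -kR HD D0 mul0mx //.
have e1J : e1 *m J = pair a2 (e2 *m J) *: e1 - pair a2 (e1 *m J) *: e2.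
  have h : e1 *m J = - (a2 *m J^T *m Rm) by rewrite /e1 mulNmx V3.
  by rewrite {1}h RF !pair_trR opprB.
have hb : pair a2 (e1 *m J) = 0.
  have := congr1 (pair a2) e1J; rewrite pairBr !pairZr p21 p22 mulr0 sub0r mulr1.
  move/eqP; rewrite -addr_eq0 -mulr2n mulrn_eq0 /= => /eqP //.
set l := pair a2 (e2 *m J).
have E1J : e1 *m J = l *: e1 by rewrite e1J hb scale0r subr0.
have e2J : e2 *m J = l *: e2 - pair a1 (e2 *m J) *: e1.
  have h : e2 *m J = a1 *m J^T *m Rm by rewrite /e2 V3.
  by rewrite {1}h RF !pair_trR E1J pairZr p11 mulr1.
have hc : pair a1 (e2 *m J) = 0.
  have := congr1 (pair a1) e2J; rewrite pairBr !pairZr p11 p12 mulr0 sub0r mulr1.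
  move/eqP; rewrite -addr_eq0 -mulr2n mulrn_eq0 /= => /eqP //.
have E2J : e2 *m J = l *: e2 by rewrite e2J hc scale0r subr0.
clearbody l e1 e2.
have JJ1 : forall u : V, u *m J *m J + u = - (u *m S *m Rm).
  move=> u; have H := V1 u.
  apply: (addIr (u *m S *m Rm)); rewrite addNr -addrA [u + _]addrC addrA H addNr //.
have nz : 1 + l ^+ 2 != 0.
  by apply: lt0r_neq0; have := sqr_ge0 l; lra.
pose c := (1 + l ^+ 2)^-1.
pose PiM : 'M[R]_4 := 1%:M - c *: (J *m J + 1%:M).
have PiM_nz : PiM != 0.
  apply/negP => /eqP H.
  have H1 : 1%:M = c *: (J *m J + 1%:M) by apply/eqP; rewrite -subr_eq0 -/PiM H.
  have H2 : J *m J + 1%:M = - (S *m Rm).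
    by apply: mx_ext => u; rewrite mulmxDr mulmx1 mulmxN !mulmxA JJ1.
  have : (1%:M <= Rm)%MS by rewrite H1 H2 scalerN scalemxAl -mulNmx submxMl.
  by move/mxrankS; rewrite mxrank1 Hrank.
have [i0 Hi0] : exists i0, row i0 PiM != 0.
  case: (boolP [exists i, row i PiM != 0]) => [/existsP [i1 H]|/existsPn H]; first by exists i1.
  by case/negP: PiM_nz; apply/eqP/row_matrixP => i1; rewrite row0; apply/eqP; move: (H i1); rewrite negbK.
pose v : V := delta_mx 0 i0.
pose x := pair (v *m S) e1.
pose y := pair (v *m S) e2.
have vJJ : v *m J *m J = - (x *: e2 - y *: e1) - v.
  by rewrite -(addrK v (v *m J *m J)) (JJ1 v) RF.
have EJJ1 : e1 *m J *m J = l ^+ 2 *: e1 by rewrite E1J -scalemxAl E1J scalerA expr2.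
have EJJ2 : e2 *m J *m J = l ^+ 2 *: e2 by rewrite E2J -scalemxAl E2J scalerA expr2.
pose e3 := row i0 PiM.
have e3E : e3 = v - c *: (- (x *: e2 - y *: e1)).
  rewrite /e3 rowE -/v /PiM mulmxBr mulmx1 -scalemxAr mulmxDr mulmx1 mulmxA.
  by rewrite (JJ1 v) RF.
have e3JJ : e3 *m J *m J = - e3.
  rewrite e3E; do 4 rewrite ?mulmxBl ?mulmxDl ?mulNmx -?scalemxAl; rewrite vJJ EJJ1 EJJ2.
  apply/rowP => k; rewrite !mxE /c; field; exact: nz.
have e3nz : e3 != 0 by [].
clearbody e3.
pose e4 := - (e3 *m J).
have E3J : e3 *m J = - e4 by rewrite /e4 opprK.
have E4J : e4 *m J = e3 by rewrite /e4 mulNmx e3JJ opprK.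
clearbody e4.
have e4JJ : e4 *m J *m J = - e4 by rewrite E4J E3J.
pose P : 'M[R]_4 := \matrix_(k, m) (nth 0 [:: e1; e2; e3; e4] k) 0 m.
have P1 : row o1 P = e1 by apply/rowP => m; rewrite !mxE.
have P2 : row o2 P = e2 by apply/rowP => m; rewrite !mxE.
have P3 : row o3 P = e3 by apply/rowP => m; rewrite !mxE.
have P4 : row o4 P = e4 by apply/rowP => m; rewrite !mxE.
have HP : P \in unitmx.
  rewrite -row_free_unit; apply: inj_row_free => z.
  rewrite rowsum4 P1 P2 P3 P4 => H0.
  have H1 := congr1 (fun w => w *m J *m J + w) H0; rewrite /= in H1.
  move: H1; do 4 rewrite ?mulmxBl ?mulmxDl ?mulNmx -?scalemxAl.
  rewrite EJJ1 EJJ2 e3JJ e4JJ !mul0mx addr0 => H1.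
  have Ha1 := congr1 (pair a1) H1; have Ha2 := congr1 (pair a2) H1.
  rewrite ?pairDr ?pairZr ?pairNr ?pairZr ?p11 ?p12 ?p21 ?p22 ?pair0r in Ha1 Ha2.
  have hx1 : (z 0 o1) = 0.
    have : (1 + l ^+ 2) * (z 0 o1) = 0 by rewrite -Ha1; ring.
    by move/eqP; rewrite mulf_eq0 (negbTE nz) /= => /eqP.
  have hx2 : (z 0 o2) = 0.
    have : (1 + l ^+ 2) * (z 0 o2) = 0 by rewrite -Ha2; ring.
    by move/eqP; rewrite mulf_eq0 (negbTE nz) /= => /eqP.
  have H3 : (z 0 o3) *: e3 + (z 0 o4) *: e4 = 0.
    by move: H0; rewrite hx1 hx2 !scale0r !add0r.
  have H4 := congr1 (fun w => w *m J) H3; rewrite /= in H4.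
  move: H4; rewrite mulmxDl -!scalemxAl E3J E4J mul0mx => H4.
  have [k Hk] := nz_coord e3nz.
  have C3 := congr1 (fun w : V => w 0 k) H3; have C4 := congr1 (fun w : V => w 0 k) H4.
  rewrite /= !mxE in C3 C4.
  have hsq : ((z 0 o3) ^+ 2 + (z 0 o4) ^+ 2) * e3 0 k = 0.
    have -> : ((z 0 o3) ^+ 2 + (z 0 o4) ^+ 2) * e3 0 k =
      (z 0 o3) * ((z 0 o3) * e3 0 k + (z 0 o4) * e4 0 k) + (z 0 o4) * ((z 0 o3) * (- e4 0 k) + (z 0 o4) * e3 0 k) by ring.
    by rewrite C3 C4; ring.
  move/eqP: hsq; rewrite mulf_eq0 (negbTE Hk) orbF => /eqP hsq.
  have hx3 : (z 0 o3) = 0 by have := sqr_ge0 (z 0 o3); have := sqr_ge0 (z 0 o4); nra.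
  have hx4 : (z 0 o4) = 0 by have := sqr_ge0 (z 0 o3); have := sqr_ge0 (z 0 o4); nra.
  by apply: row4_eq; rewrite mxE ?hx1 ?hx2 ?hx3 ?hx4.
have S12 : pair (e1 *m S) e2 = 1 + l ^+ 2.
  have h := congr1 (pair a1) (V1 e1).
  rewrite EJJ1 RF pairDr !pairBr !pairZr SkS0 p11 p12 pairNr p11 in h; lra.
have S3 : pair (e3 *m S) e1 = 0 /\ pair (e3 *m S) e2 = 0.
  have h1 := congr1 (pair a1) (V1 e3); have h2 := congr1 (pair a2) (V1 e3).
  rewrite e3JJ RF pairDr !pairBr !pairZr p11 p12 !pairNr in h1.
  rewrite e3JJ RF pairDr !pairBr !pairZr p21 p22 !pairNr in h2.
  split; lra.
have S4 : pair (e4 *m S) e1 = 0 /\ pair (e4 *m S) e2 = 0.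
  have h1 := congr1 (pair a1) (V1 e4); have h2 := congr1 (pair a2) (V1 e4).
  rewrite e4JJ RF pairDr !pairBr !pairZr p11 p12 !pairNr in h1.
  rewrite e4JJ RF pairDr !pairBr !pairZr p21 p22 !pairNr in h2.
  split; lra.
have S34 : pair (e3 *m S) e4 = 0.
  have e4E : e4 = - (e3 *m J) by rewrite E3J opprK.
  have ht : pair (e3 *m S) (e3 *m J) = 0.
    have h := SkS (e3 *m J) e3.
    rewrite V2 pair_trR in h.
    by move/eqP: h; rewrite -mulr2n mulrn_eq0 /= => /eqP.
  by rewrite e4E pairNr ht oppr0.
have Sk u w : pair (u *m S) w = - pair (w *m S) u.
  by apply/eqP; rewrite -addr_eq0 SkS.
exists P, l; split => //.
- apply: mx4_eq; rewrite !row_mul ?P1 ?P2 ?P3 ?P4 ?E1J ?E2J ?E3J ?E4J rowsum4 !rowij P1 P2 P3 P4 !mxE /=;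
  by rewrite ?scale0r ?add0r ?addr0 ?scaleN1r ?scale1r.
- apply: mx_ext => al; rewrite RF !mulmxA R0m_row mulmxBl -!scalemxAl -!rowE P1 P2.
  by rewrite !coord_trP P1 P2.
- case: S3 => S31 S32; case: S4 => S41 S42.
  have S21 : pair (e2 *m S) e1 = - (1 + l ^+ 2) by rewrite Sk S12.
  have S13 : pair (e1 *m S) e3 = 0 by rewrite Sk S31 oppr0.
  have S14 : pair (e1 *m S) e4 = 0 by rewrite Sk S41 oppr0.
  have S23 : pair (e2 *m S) e3 = 0 by rewrite Sk S32 oppr0.
  have S24 : pair (e2 *m S) e4 = 0 by rewrite Sk S42 oppr0.
  have S43 : pair (e4 *m S) e3 = 0 by rewrite Sk S34 oppr0.
  apply: mx4_eq; apply: row4_eq; rewrite !rowij entry_PSPt ?P1 ?P2 ?P3 ?P4 !mxE /=;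
  by rewrite ?SkS0 ?S12 ?S21 ?S13 ?S14 ?S23 ?S24 ?S31 ?S32 ?S41 ?S42 ?S34 ?S43.
Qed.
End NF.
End C.

Section NF2.
Variable R : realType.
Notation V := 'rV[R]_4.

Lemma nf (br : V -> V -> V) (J Rm S : 'M[R]_4) :
  gc_triple br J Rm S -> gc_type1 Rm ->
  exists (P : 'M[R]_4) (l : R), [/\ P \in unitmx,
    P *m J *m invmx P = Nm l, (invmx P)^T *m Rm *m invmx P = R0m R
    & P *m S *m P^T = S0m l].
Proof.
case=> K2 Sk _ Hr.
have V1 : forall u : V, u *m J *m J + u *m S *m Rm = - u.
  move=> u; have := K2 (u, 0); rewrite /Kmap /dualmx /popp /= !mul0mx !addr0 subr0.
  by case.
have V2 : forall u : V, u *m J *m S = u *m S *m J^T.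
  move=> u; have := K2 (u, 0); rewrite /Kmap /dualmx /popp /= !mul0mx !addr0 subr0.
  by case=> _ /eqP; rewrite oppr0 subr_eq0 => /eqP.
have V3 : forall al : V, al *m Rm *m J = al *m J^T *m Rm.
  move=> al; have := K2 (0, al); rewrite /Kmap /dualmx /popp /= ?mul0mx ?add0r ?sub0r.
  by case=> /eqP; rewrite oppr0 mulNmx subr_eq0 => /eqP.
have SkR : forall al be : V, pair be (al *m Rm) + pair al (be *m Rm) = 0.
  move=> al be; have := Sk (0, al) (0, be).
  rewrite /Phi_pairing /Kmap /dualmx /= ?mul0mx ?add0r ?sub0r ?pair0r ?add0r ?addr0.
  by rewrite -mulrDr => /eqP; rewrite mulf_eq0 invr_eq0 pnatr_eq0 /= => /eqP.
have SkS : forall u v : V, pair (u *m S) v + pair (v *m S) u = 0.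
  move=> u v; have := Sk (u, 0) (v, 0).
  rewrite /Phi_pairing /Kmap /dualmx /= !mul0mx !addr0 !subr0 !pair0l add0r addr0.
  by rewrite -mulrDr => /eqP; rewrite mulf_eq0 invr_eq0 pnatr_eq0 /= => /eqP.
have [P [l [HP PJ PR PS]]] := nf_main V1 V2 V3 SkR SkS Hr.
exists P, l; split => //.
- by rewrite PJ mulmxK.
- by rewrite PR !mulmxA -trmx_mul mulmxV // trmx1 mul1mx mulmxK.
Qed.
End NF2.


Section D.
Variable R : realType.
Notation V := 'rV[R]_4.
Notation d i := (delta_mx 0 i : 'rV[R]_4).

Definition cc (br : V -> V -> V) (i j k : 'I_4) : R := br (d i) (d j) 0 k.

Lemma Nt_row (l : R) (X : V) : X *m (Nm l)^T =
  (l * X 0 o1) *: d o1 + (l * X 0 o2) *: d o2 - X 0 o4 *: d o3 + X 0 o3 *: d o4.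
Proof. by apply: row4_eq; rewrite !mxE sum4 !mxE /=; ring. Qed.

Lemma adt_coord br u al j : adt br u al 0 j = - pair al (br u (d j)).
Proof. by rewrite mxE. Qed.

Section Std.
Variables (br : V -> V -> V) (l : R).
Hypothesis Hl : is_lie_bracket br.
Hypothesis HN : forall a b, nijenhuis br (Kmap (Nm l) (R0m R) (S0m l)) a b = pzero R.
Hypothesis Hu : unimodular br.

Notation K := (Kmap (Nm l) (R0m R) (S0m l)).

Lemma Kd X : K (0, X) = (X *m R0m R, - (X *m (Nm l)^T)).
Proof. by rewrite /Kmap /dualmx !mul0mx add0r sub0r. Qed.

Lemma adt0 al : adt br 0 al = 0.
Proof. by apply/rowP => j; rewrite !mxE (br0l Hl) pair0r oppr0. Qed.
Lemma adtNl u al : adt br (- u) al = - adt br u al.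
Proof. by apply/rowP => j; rewrite !mxE (brNl Hl) pairNr. Qed.
Lemma adtNr u al : adt br u (- al) = - adt br u al.
Proof. by apply/rowP => j; rewrite !mxE pairNl. Qed.
Lemma adtZr u (c : R) al : adt br u (c *: al) = c *: adt br u al.
Proof. by apply/rowP => j; rewrite !mxE pairZl mulrN. Qed.

Lemma pair_dd j (v : V) : pair (d j) v = v 0 j.
Proof. exact: pair_delta. Qed.
Lemma pair_dr j (v : V) : pair v (d j) = v 0 j.
Proof. rewrite -(pair_delta j v) /pair; apply: eq_bigr => k _; rewrite mulrC. by []. Qed.

Lemma dR1 : d o1 *m R0m R = d o2.
Proof. by apply: row4_eq; rewrite ?R0m_row ?Nt_row !mxE /=; ring. Qed.
Lemma dR2 : d o2 *m R0m R = - d o1.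
Proof. by apply: row4_eq; rewrite ?R0m_row ?Nt_row !mxE /=; ring. Qed.
Lemma dR3 : d o3 *m R0m R = 0.
Proof. by apply: row4_eq; rewrite ?R0m_row ?Nt_row !mxE /=; ring. Qed.
Lemma dN1 : d o1 *m (Nm l)^T = l *: d o1.
Proof. by apply: row4_eq; rewrite ?R0m_row ?Nt_row !mxE /=; ring. Qed.
Lemma dN2 : d o2 *m (Nm l)^T = l *: d o2.
Proof. by apply: row4_eq; rewrite ?R0m_row ?Nt_row !mxE /=; ring. Qed.
Lemma dN3 : d o3 *m (Nm l)^T = d o4.
Proof. by apply: row4_eq; rewrite ?R0m_row ?Nt_row !mxE /=; ring. Qed.

Lemma PBE u al v be : Phi_bracket br (u, al) (v, be) = (br u v, adt br u be - adt br v al).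
Proof. by []. Qed.
Lemma paddE (a b : Phi R) : padd a b = (a.1 + b.1, a.2 + b.2).
Proof. by []. Qed.
Lemma poppE (a : Phi R) : popp a = (- a.1, - a.2).
Proof. by []. Qed.

Ltac nsimp H := rewrite /nijenhuis in H; cbv zeta in H;
  do 4 (rewrite ?Kd ?dR1 ?dR2 ?dR3 ?dN1 ?dN2 ?dN3 ?PBE ?(br0r Hl) ?(br0l Hl) ?adt0
     ?subr0 ?sub0r ?oppr0 ?mul0mx ?adtNl ?adtNr ?adtZr ?(brNl Hl) ?(brNr Hl) in H);
  rewrite !paddE !poppE /pzero /= in H.

Lemma ccE i j k : br (d i) (d j) 0 k = cc br i j k.
Proof. by []. Qed.

Ltac coord H k := let E := fresh "E" in
  have E := congr1 (fun w : V => w 0 k) H;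
  rewrite /= ?R0m_row ?Nt_row !mxE ?adt_coord ?pair_dd ?ccE /= in E.

Lemma ccA i j k : cc br i j k = - cc br j i k.
Proof. by rewrite /cc (brC Hl) mxE. Qed.
Lemma ccD i k : cc br i i k = 0.
Proof. by rewrite /cc (brii Hl) mxE. Qed.
Lemma cc21 k : cc br o2 o1 k = - cc br o1 o2 k. Proof. exact: ccA. Qed.
Lemma cc31 k : cc br o3 o1 k = - cc br o1 o3 k. Proof. exact: ccA. Qed.
Lemma cc41 k : cc br o4 o1 k = - cc br o1 o4 k. Proof. exact: ccA. Qed.
Lemma cc32 k : cc br o3 o2 k = - cc br o2 o3 k. Proof. exact: ccA. Qed.
Lemma cc42 k : cc br o4 o2 k = - cc br o2 o4 k. Proof. exact: ccA. Qed.
Lemma cc43 k : cc br o4 o3 k = - cc br o3 o4 k. Proof. exact: ccA. Qed.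
Lemma cc11 k : cc br o1 o1 k = 0. Proof. exact: ccD. Qed.
Lemma cc22 k : cc br o2 o2 k = 0. Proof. exact: ccD. Qed.
Lemma cc33 k : cc br o3 o3 k = 0. Proof. exact: ccD. Qed.
Lemma cc44 k : cc br o4 o4 k = 0. Proof. exact: ccD. Qed.

Ltac ccnorm := rewrite ?cc21 ?cc31 ?cc41 ?cc32 ?cc42 ?cc43 ?cc11 ?cc22 ?cc33 ?cc44.

Local Notation c i j k := (cc br i j k).

Lemma relN13 : c o1 o2 o3 = 0 /\ c o1 o2 o4 = 0 /\ c o2 o3 o4 = - c o2 o4 o3 /\ c o2 o3 o3 = c o2 o4 o4.
Proof.
have H := HN (0, d o1) (0, d o3).
nsimp H. case: H => H1 H2.
coord H1 o2. coord H2 o1. coord H2 o3. coord H2 o4.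
ccnorm.
move: E E0 E1 E2; ccnorm => E E0 E1 E2.
split; [nra | split; [nra | split; nra]].
Qed.

Lemma relN23 : c o1 o3 o4 = - c o1 o4 o3 /\ c o1 o3 o3 = c o1 o4 o4.
Proof.
have H := HN (0, d o2) (0, d o3).
nsimp H. case: H => H1 H2.
coord H2 o3. coord H2 o4.
move: E E0; ccnorm => E E0.
split; lra.
Qed.

Lemma relN12 : c o1 o3 o1 = - c o2 o3 o2 /\ c o1 o4 o1 = - c o2 o4 o2.
Proof.
have H := HN (0, d o1) (0, d o2).
nsimp H. case: H => H1 H2.
coord H2 o3. coord H2 o4.
move: E E0; ccnorm => E E0.
set X := c o1 o3 o1 + c o2 o3 o2; set Y := c o1 o4 o1 + c o2 o4 o2.
have e1 : l * X + Y = 0 by rewrite /X /Y; nra.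
have e2 : l * Y - X = 0 by rewrite /X /Y; nra.
have hX : (1 + l ^+ 2) * X = 0.
  have -> : (1 + l ^+ 2) * X = l * (l * X + Y) - (l * Y - X) by ring.
  by rewrite e1 e2; ring.
have hY : (1 + l ^+ 2) * Y = 0.
  have -> : (1 + l ^+ 2) * Y = (l * X + Y) + l * (l * Y - X) by ring.
  by rewrite e1 e2; ring.
have nz : 1 + l ^+ 2 != 0 by apply: lt0r_neq0; have := sqr_ge0 l; lra.
move/eqP: hX; rewrite mulf_eq0 (negbTE nz) /= /X => /eqP hX.
move/eqP: hY; rewrite mulf_eq0 (negbTE nz) /= /Y => /eqP hY.
split; lra.
Qed.
Lemma tr_cc k : \tr (adm br (d k)) = c k o1 o1 + c k o2 o2 + c k o3 o3 + c k o4 o4.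
Proof. by rewrite /mxtrace sum4 !mxE. Qed.

Lemma rels :
  [/\ c o1 o2 o1 = 2 * c o2 o4 o4, c o1 o2 o2 = - (2 * c o1 o4 o4),
      c o1 o2 o3 = 0, c o1 o2 o4 = 0 &
  [/\ c o1 o3 o1 = - c o2 o3 o2, c o1 o3 o3 = c o1 o4 o4,
      c o1 o3 o4 = - c o1 o4 o3, c o1 o4 o1 = - c o2 o4 o2 &
  [/\ c o2 o3 o3 = c o2 o4 o4, c o2 o3 o4 = - c o2 o4 o3,
      c o3 o4 o3 = 0 & c o3 o4 o4 = 0]]].
Proof.
have [h1 [h2 [h3 h4]]] := relN13.
have [h5 h6] := relN23.
have [h7 h8] := relN12.
have t1 := Hu (d o1); have t2 := Hu (d o2); have t3 := Hu (d o3); have t4 := Hu (d o4).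
rewrite tr_cc in t1; rewrite tr_cc in t2; rewrite tr_cc in t3; rewrite tr_cc in t4.
move: t1 t2 t3 t4; ccnorm => t1 t2 t3 t4.
split; [lra|lra|lra|lra|split; [lra|lra|lra|lra|split; lra]].
Qed.

Lemma br2 i j k m : br (d i) (br (d j) (d k)) 0 m = \sum_l c j k l * c i l m.
Proof.
rewrite {1}(row_sum_delta (br (d j) (d k))) (brsumr Hl) summxE.
by apply: eq_bigr => q _; rewrite (brZr Hl) mxE.
Qed.

Lemma jac i j k m :
  \sum_q (c j k q * c i q m + c k i q * c j q m + c i j q * c k q m) = 0.
Proof.
have [_ _ H3] := Hl.
have := congr1 (fun w : V => w 0 m) (H3 (d i) (d j) (d k)).
rewrite /= !mxE !br2 -!big_split /= => ->.
by [].
Qed.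

Lemma rel1 : c o1 o2 o1 = 2 * c o2 o4 o4.
Proof. by case: rels => r1 r2 r3 r4 [r5 r6 r7 r8 [r9 r10 r11 r12]]. Qed.
Lemma rel2 : c o1 o2 o2 = - (2 * c o1 o4 o4).
Proof. by case: rels => r1 r2 r3 r4 [r5 r6 r7 r8 [r9 r10 r11 r12]]. Qed.
Lemma rel3 : c o1 o2 o3 = 0.
Proof. by case: rels => r1 r2 r3 r4 [r5 r6 r7 r8 [r9 r10 r11 r12]]. Qed.
Lemma rel4 : c o1 o2 o4 = 0.
Proof. by case: rels => r1 r2 r3 r4 [r5 r6 r7 r8 [r9 r10 r11 r12]]. Qed.
Lemma rel5 : c o1 o3 o1 = - c o2 o3 o2.
Proof. by case: rels => r1 r2 r3 r4 [r5 r6 r7 r8 [r9 r10 r11 r12]]. Qed.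
Lemma rel6 : c o1 o3 o3 = c o1 o4 o4.
Proof. by case: rels => r1 r2 r3 r4 [r5 r6 r7 r8 [r9 r10 r11 r12]]. Qed.
Lemma rel7 : c o1 o3 o4 = - c o1 o4 o3.
Proof. by case: rels => r1 r2 r3 r4 [r5 r6 r7 r8 [r9 r10 r11 r12]]. Qed.
Lemma rel8 : c o1 o4 o1 = - c o2 o4 o2.
Proof. by case: rels => r1 r2 r3 r4 [r5 r6 r7 r8 [r9 r10 r11 r12]]. Qed.
Lemma rel9 : c o2 o3 o3 = c o2 o4 o4.
Proof. by case: rels => r1 r2 r3 r4 [r5 r6 r7 r8 [r9 r10 r11 r12]]. Qed.
Lemma rel10 : c o2 o3 o4 = - c o2 o4 o3.
Proof. by case: rels => r1 r2 r3 r4 [r5 r6 r7 r8 [r9 r10 r11 r12]]. Qed.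
Lemma rel11 : c o3 o4 o3 = 0.
Proof. by case: rels => r1 r2 r3 r4 [r5 r6 r7 r8 [r9 r10 r11 r12]]. Qed.
Lemma rel12 : c o3 o4 o4 = 0.
Proof. by case: rels => r1 r2 r3 r4 [r5 r6 r7 r8 [r9 r10 r11 r12]]. Qed.

Ltac relsimp := rewrite ?rel1 ?rel2 ?rel3 ?rel4 ?rel5 ?rel6 ?rel7 ?rel8 ?rel9 ?rel10 ?rel11 ?rel12.

Ltac jacobi i j k m := let J := fresh "J" in
  have J := jac i j k m; rewrite !sum4 in J; move: J; ccnorm; relsimp; move=> J.

Lemma row1d k : row k (1%:M : 'M[R]_4) = d k.
Proof. by rewrite rowE mulmx1. Qed.

Lemma brd i j : br (d i) (d j) = c i j o1 *: d o1 + c i j o2 *: d o2 + c i j o3 *: d o3 + c i j o4 *: d o4.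
Proof. by apply: row4_eq; rewrite !mxE /= /cc; ring. Qed.

Lemma std_parts :
  [/\ (1%:M : 'M[R]_4) \in unitmx /\ (forall i j, pair (d i) (row j 1%:M) = (i == j)%:R),
      [/\ d o1 *m Nm l = l *: d o1, d o2 *m Nm l = l *: d o2,
          d o3 *m Nm l = - d o4 & d o4 *m Nm l = d o3],
      (forall alpha, alpha *m R0m R = pair alpha (d o1) *: d o2 - pair alpha (d o2) *: d o1) &
      (forall u, u *m S0m l =
         (1 + l ^+ 2) *: (pair (d o1) u *: d o2 - pair (d o2) u *: d o1))].
Proof.
have q1 : forall i j, pair (d i) (row j 1%:M) = (i == j)%:R.
  by move=> i j; rewrite pair_dd row1d mxE eqxx /= eq_sym.
have q2 : [/\ d o1 *m Nm l = l *: d o1, d o2 *m Nm l = l *: d o2,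
          d o3 *m Nm l = - d o4 & d o4 *m Nm l = d o3].
  by split; apply: row4_eq; rewrite !mxE sum4 !mxE /=; ring.
have q3 : forall alpha, alpha *m R0m R = pair alpha (d o1) *: d o2 - pair alpha (d o2) *: d o1.
  by move=> al; apply: row4_eq; rewrite R0m_row !pair_dr !mxE /=; ring.
have q4 : forall u, u *m S0m l =
         (1 + l ^+ 2) *: (pair (d o1) u *: d o2 - pair (d o2) u *: d o1).
  by move=> u; apply: row4_eq; rewrite !pair_dd !mxE sum4 !mxE /=; ring.
by split => //; split => //; exact: unitmx1.
Qed.

Lemma minorsC : c o1 o4 o4 = 0 -> c o2 o4 o4 = 0 -> c o1 o4 o3 = 0 -> c o2 o4 o3 = 0 ->
 [/\ c o2 o3 o2 * c o1 o4 o2 - c o1 o3 o2 * c o2 o4 o2 = 0,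
     c o2 o3 o2 * c o2 o4 o1 - c o2 o3 o1 * c o2 o4 o2 = 0 &
     c o1 o3 o2 * c o2 o4 o1 - c o2 o3 o1 * c o1 o4 o2 = 0].
Proof.
move=> hb ha h143 h243.
jacobi o1 o3 o4 o2. jacobi o2 o3 o4 o1. jacobi o1 o3 o4 o1.
rewrite hb ha h143 h243 in J J0 J1.
split; nra.
Qed.

Lemma coreA : c o1 o4 o4 = 0 -> c o2 o4 o4 = 2^-1 -> Concl br (Nm l) (R0m R) (S0m l).
Proof.
move=> hb ha.
jacobi o1 o2 o3 o4. rewrite hb ha in J.
have h143 : c o1 o4 o3 = 0 by nra.
jacobi o1 o2 o3 o1. jacobi o1 o2 o4 o1. rewrite hb ha h143 in J0 J1.
have h242 : c o2 o4 o2 = 0 by nra.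
have h232 : c o2 o3 o2 = 0 by nra.
jacobi o1 o2 o3 o2. jacobi o1 o2 o4 o2. rewrite hb ha h143 h242 h232 in J2 J3.
have h132 : c o1 o3 o2 = 0 by nra.
have h142 : c o1 o4 o2 = 0 by nra.
jacobi o1 o3 o4 o1. jacobi o2 o3 o4 o1.
rewrite hb ha h143 h242 h232 h132 h142 in J4 J5.
have h342 : c o3 o4 o2 = 0 by nra.
have h341 : c o3 o4 o1 = 0 by nra.
exists 1%:M, (fun i => d i), l; rewrite !row1d.
have [p1 p2 p3 p4] := std_parts.
split => //; rewrite ?row1d //.
apply: Or31; exists (c o2 o4 o3), (- c o2 o3 o1), (- c o2 o4 o1).
split; [ | | | split ]; rewrite brd; ccnorm; relsimp;
  rewrite ?hb ?ha ?h143 ?h242 ?h232 ?h132 ?h142 ?h342 ?h341;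
  apply: row4_eq; rewrite !mxE /=; field.
all: done.
Qed.

Lemma coreB : c o1 o4 o4 = 0 -> c o2 o4 o4 = 0 -> c o1 o4 o3 = 0 -> c o2 o4 o3 != 0 ->
  Concl br (Nm l) (R0m R) (S0m l).
Proof.
move=> hb ha h143 hy.
have cancel x : x * c o2 o4 o3 = 0 -> x = 0.
  by move/eqP; rewrite mulf_eq0 (negbTE hy) orbF => /eqP.
jacobi o1 o2 o3 o1. jacobi o1 o2 o3 o2. jacobi o1 o2 o4 o1. jacobi o1 o2 o4 o2.
rewrite hb ha h143 in J J0 J1 J2.
have h242 : c o2 o4 o2 = 0 by apply: cancel; nra.
have h142 : c o1 o4 o2 = 0 by apply: cancel; nra.
have h232 : c o2 o3 o2 = 0 by apply: cancel; nra.
have h132 : c o1 o3 o2 = 0 by apply: cancel; nra.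
exists 1%:M, (fun i => d i), l; rewrite !row1d.
have [p1 p2 p3 p4] := std_parts.
split => //; rewrite ?row1d //.
apply: Or32; exists (c o2 o4 o3), (- c o2 o3 o1), (- c o2 o4 o1), (c o3 o4 o1), (c o3 o4 o2).
split; [ | | | split ]; rewrite brd; ccnorm; relsimp;
  rewrite ?hb ?ha ?h143 ?h242 ?h232 ?h132 ?h142;
  apply: row4_eq; rewrite !mxE /=; ring.
Qed.

Lemma coreC : c o1 o4 o4 = 0 -> c o2 o4 o4 = 0 -> c o1 o4 o3 = 0 -> c o2 o4 o3 = 0 ->
  c o1 o3 o2 = 0 -> c o2 o3 o1 = 0 -> c o2 o3 o2 = 0 ->
  (`|c o2 o4 o2 ^+ 2 + (- c o2 o4 o1) * (- c o1 o4 o2)| == 0) ||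
  (`|c o2 o4 o2 ^+ 2 + (- c o2 o4 o1) * (- c o1 o4 o2)| == 1) ->
  Concl br (Nm l) (R0m R) (S0m l).
Proof.
move=> hb ha h143 h243 h132 h231 h232 hpq.
exists 1%:M, (fun i => d i), l; rewrite !row1d.
have [p1 p2 p3 p4] := std_parts.
split => //; rewrite ?row1d //.
apply: Or33; exists (c o3 o4 o1), (c o3 o4 o2), (c o2 o4 o2), (- c o2 o4 o1), (- c o1 o4 o2).
split => //.
split; [ | | | split ]; rewrite brd; ccnorm; relsimp;
  rewrite ?hb ?ha ?h143 ?h243 ?h132 ?h231 ?h232;
  apply: row4_eq; rewrite !mxE /=; ring.
Qed.

End Std.
End D.


Section E.
Variable R : realType.
Notation V := 'rV[R]_4.
Notation d i := (delta_mx 0 i : 'rV[R]_4).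

Section Mats.
Variables (s t a b : R).
Let D := s ^+ 2 + t ^+ 2.
Let E := a ^+ 2 + b ^+ 2.
Hypothesis hD : D != 0.
Hypothesis hE : E != 0.

Definition Pm : 'M[R]_4 := \matrix_(i, j)
  match val i, val j with
  | 0%N, 0%N => s | 0%N, 1%N => - t | 1%N, 0%N => t / D | 1%N, 1%N => s / D
  | 2%N, 2%N => a | 2%N, 3%N => b | 3%N, 2%N => - b | 3%N, 3%N => a | _, _ => 0 end.
Definition Qm : 'M[R]_4 := \matrix_(i, j)
  match val i, val j with
  | 0%N, 0%N => s / D | 0%N, 1%N => t | 1%N, 0%N => - t / D | 1%N, 1%N => s
  | 2%N, 2%N => a / E | 2%N, 3%N => - b / E | 3%N, 2%N => b / E | 3%N, 3%N => a / E
  | _, _ => 0 end.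

Lemma PQ : Pm *m Qm = 1%:M.
Proof.
apply: mx4_eq; apply: row4_eq; rewrite ?rowij; do 3 (rewrite ?mxE ?sum4); rewrite /=; rewrite /D /E; try field; try (apply/andP; split); try exact hD; try exact hE; try done.
Qed.

Lemma Pm_unit : Pm \in unitmx.
Proof. by case: (mulmx1_unit PQ). Qed.

Lemma invPm : invmx Pm = Qm.
Proof.
by rewrite -[invmx Pm]mulmx1 -PQ mulmxA mulVmx ?Pm_unit // mul1mx.
Qed.

Lemma Pm_N (l : R) : Pm *m Nm l *m invmx Pm = Nm l.
Proof.
rewrite invPm.
apply: mx4_eq; apply: row4_eq; rewrite ?rowij; do 3 (rewrite ?mxE ?sum4); rewrite /=; rewrite /D /E; try field; try (apply/andP; split); try exact hD; try exact hE; try done.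
Qed.

Lemma Pm_R : (invmx Pm)^T *m R0m R *m invmx Pm = R0m R.
Proof.
rewrite invPm.
apply: mx4_eq; apply: row4_eq; rewrite ?rowij; do 3 (rewrite ?mxE ?sum4); rewrite /=; rewrite /D /E; try field; try (apply/andP; split); try exact hD; try exact hE; try done.
Qed.

Lemma Pm_S (l : R) : Pm *m S0m l *m Pm^T = S0m l.
Proof.
apply: mx4_eq; apply: row4_eq; rewrite ?rowij; do 3 (rewrite ?mxE ?sum4); rewrite /=; rewrite /D /E; try field; try (apply/andP; split); try exact hD; try exact hE; try done.
Qed.
End Mats.
End E.


Section F.
Variable R : realType.
Notation V := 'rV[R]_4.
Notation d i := (delta_mx 0 i : 'rV[R]_4).

Section Lie.
Variable br : V -> V -> V.
Hypothesis Hl : is_lie_bracket br.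

Lemma brE (u v : V) m :
  br u v 0 m = \sum_a \sum_b u 0 a * v 0 b * cc br a b m.
Proof.
rewrite {1}(row_sum_delta u) (brsuml Hl) summxE; apply: eq_bigr => a _.
rewrite (brZl Hl) mxE {1}(row_sum_delta v) (brsumr Hl) summxE mulr_sumr.
by apply: eq_bigr => b _; rewrite (brZr Hl) mxE mulrA.
Qed.

Lemma ccT (P : 'M[R]_4) i j k :
  cc (tbr P br) i j k =
  \sum_m (\sum_a \sum_b P i a * P j b * cc br a b m) * invmx P m k.
Proof.
rewrite /cc /tbr mxE; apply: eq_bigr => m _; rewrite brE -!rowE.
by congr (_ * _); apply: eq_bigr => a _; apply: eq_bigr => b _; rewrite !mxE.
Qed.
End Lie.
Lemma step br l s t p q : s ^+ 2 + t ^+ 2 != 0 -> p ^+ 2 + q ^+ 2 != 0 ->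
  Hyp br (Nm l) (R0m R) (S0m l) ->
  (Hyp (tbr (Pm s t p q) br) (Nm l) (R0m R) (S0m l) ->
     Concl (tbr (Pm s t p q) br) (Nm l) (R0m R) (S0m l)) ->
  Concl br (Nm l) (R0m R) (S0m l).
Proof.
move=> hD hE H K.
have HP := Pm_unit hD hE.
have H' := @Hyp_transport _ _ _ _ _ _ HP H.
rewrite (Pm_N hD hE) (Pm_R hD hE) (Pm_S p q hD) in H'.
case: H => Hl _ _.
apply: (@Concl_transport _ _ _ _ _ _ HP Hl).
rewrite (Pm_N hD hE) (Pm_R hD hE) (Pm_S p q hD).
exact: K H'.
Qed.

Definition qf (x1 x2 x3 y1 y2 y3 al be : R) :=
  (- be * x1 + al * y1) ^+ 2 + (- be * x3 + al * y3) * (- be * x2 + al * y2).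

Lemma normalize (x1 x2 x3 y1 y2 y3 a0 b0 : R) :
  a0 ^+ 2 + b0 ^+ 2 != 0 ->
  a0 * x1 + b0 * y1 = 0 -> a0 * x2 + b0 * y2 = 0 -> a0 * x3 + b0 * y3 = 0 ->
  exists al be : R, [/\ al ^+ 2 + be ^+ 2 != 0,
    al * x1 + be * y1 = 0, al * x2 + be * y2 = 0, al * x3 + be * y3 = 0 &
    (`|qf x1 x2 x3 y1 y2 y3 al be| == 0) || (`|qf x1 x2 x3 y1 y2 y3 al be| == 1)].
Proof.
move=> nz h1 h2 h3.
have [Q0|Qnz] := eqVneq (qf x1 x2 x3 y1 y2 y3 a0 b0) 0.
  by exists a0, b0; split => //; rewrite Q0 normr0 eqxx.
set Q := qf x1 x2 x3 y1 y2 y3 a0 b0 in Qnz.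
have aQ : 0 < `|Q| by rewrite normr_gt0.
set sq := Num.sqrt `|Q|.
have sqp : 0 < sq by rewrite sqrtr_gt0.
have sq2 : sq ^+ 2 = `|Q| by rewrite sqr_sqrtr // ltW.
have snz : sq^-1 != 0 by rewrite invr_eq0 lt0r_neq0.
exists (sq^-1 * a0), (sq^-1 * b0); split.
- have -> : (sq^-1 * a0) ^+ 2 + (sq^-1 * b0) ^+ 2 = sq^-1 ^+ 2 * (a0 ^+ 2 + b0 ^+ 2) by ring.
  by rewrite mulf_neq0 // expf_neq0.
- by rewrite -!mulrA -mulrDr h1 mulr0.
- by rewrite -!mulrA -mulrDr h2 mulr0.
- by rewrite -!mulrA -mulrDr h3 mulr0.
- have -> : qf x1 x2 x3 y1 y2 y3 (sq^-1 * a0) (sq^-1 * b0) = Q / sq ^+ 2.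
    rewrite /Q /qf; field; exact: lt0r_neq0.
  rewrite normrM normfV normrX (gtr0_norm sqp) sq2 mulfV ?eqxx ?orbT //.
  by rewrite normr_eq0.
Qed.

Lemma choose_ab (x1 x2 x3 y1 y2 y3 : R) :
  x1 * y2 - x2 * y1 = 0 -> x1 * y3 - x3 * y1 = 0 -> x2 * y3 - x3 * y2 = 0 ->
  exists al be : R, [/\ al ^+ 2 + be ^+ 2 != 0,
    al * x1 + be * y1 = 0, al * x2 + be * y2 = 0, al * x3 + be * y3 = 0 &
    (`|qf x1 x2 x3 y1 y2 y3 al be| == 0) || (`|qf x1 x2 x3 y1 y2 y3 al be| == 1)].
Proof.
move=> m1 m2 m3.
have sq_nz (u v : R) : (u != 0) || (v != 0) -> v ^+ 2 + (- u) ^+ 2 != 0.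
  move=> h; apply/eqP => e.
  have hu : u = 0 by have := sqr_ge0 u; have := sqr_ge0 v; nra.
  have hv : v = 0 by have := sqr_ge0 u; have := sqr_ge0 v; nra.
  by move: h; rewrite hu hv eqxx.
case: (boolP ((x1 != 0) || (y1 != 0))) => [h|].
  by apply: (normalize (sq_nz _ _ h)); nra.
rewrite negb_or !negbK => /andP [/eqP hx1 /eqP hy1].
case: (boolP ((x2 != 0) || (y2 != 0))) => [h|].
  by apply: (normalize (sq_nz _ _ h)); nra.
rewrite negb_or !negbK => /andP [/eqP hx2 /eqP hy2].
case: (boolP ((x3 != 0) || (y3 != 0))) => [h|].
  by apply: (normalize (sq_nz _ _ h)); nra.
rewrite negb_or !negbK => /andP [/eqP hx3 /eqP hy3].
apply: (@normalize _ _ _ _ _ _ 1 0); rewrite ?hx1 ?hx2 ?hx3 ?hy1 ?hy2 ?hy3; try ring.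
by rewrite expr0n /= addr0 expr1n oner_eq0.
Qed.

Section Cls.
Variables (br : V -> V -> V) (l : R).
Hypothesis Hl : is_lie_bracket br.
Hypothesis HN : forall a b, nijenhuis br (Kmap (Nm l) (R0m R) (S0m l)) a b = pzero R.
Hypothesis Hu : unimodular br.
Local Notation c i j k := (cc br i j k).

Ltac newc hD hE :=
  rewrite (ccT Hl) ?(invPm hD hE); do 3 (rewrite ?mxE ?sum4); rewrite /=;
  rewrite ?(cc21 Hl) ?(cc31 Hl) ?(cc41 Hl) ?(cc32 Hl) ?(cc42 Hl) ?(cc43 Hl)
          ?(cc11 Hl) ?(cc22 Hl) ?(cc33 Hl) ?(cc44 Hl);
  rewrite ?(rel1 Hl HN Hu) ?(rel2 Hl HN Hu) ?(rel3 Hl HN Hu) ?(rel4 Hl HN Hu)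
          ?(rel5 Hl HN Hu) ?(rel6 Hl HN Hu) ?(rel7 Hl HN Hu) ?(rel8 Hl HN Hu)
          ?(rel9 Hl HN Hu) ?(rel10 Hl HN Hu) ?(rel11 Hl HN Hu) ?(rel12 Hl HN Hu).

Lemma caseA : c o2 o4 o4 ^+ 2 + c o1 o4 o4 ^+ 2 != 0 -> Concl br (Nm l) (R0m R) (S0m l).
Proof.
move=> hAB.
have hD : (2 * c o2 o4 o4) ^+ 2 + (2 * c o1 o4 o4) ^+ 2 != 0.
  apply/eqP => h; move/eqP: hAB; apply; apply/eqP; nra.
have hE : (1 : R) ^+ 2 + 0 ^+ 2 != 0 by rewrite expr0n /= addr0 expr1n oner_eq0.
apply: (step hD hE); first by split.
case=> Hl' HN' Hu'; apply: coreA => //.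
- newc hD hE. field. done.
- newc hD hE. field. done.
Qed.

Lemma caseB : c o2 o4 o4 = 0 -> c o1 o4 o4 = 0 ->
  c o2 o4 o3 ^+ 2 + c o1 o4 o3 ^+ 2 != 0 -> Concl br (Nm l) (R0m R) (S0m l).
Proof.
move=> ha hb hD.
have hE : (1 : R) ^+ 2 + 0 ^+ 2 != 0 by rewrite expr0n /= addr0 expr1n oner_eq0.
apply: (step hD hE); first by split.
case=> Hl' HN' Hu'; apply: coreB => //.
- newc hD hE; rewrite ?ha ?hb; field; done.
- newc hD hE; rewrite ?ha ?hb; field; done.
- newc hD hE; rewrite ?ha ?hb; field; done.
- have -> : cc (tbr (Pm (c o2 o4 o3) (c o1 o4 o3) 1 0) br) o2 o4 o3 = 1.
    newc hD hE; rewrite ?ha ?hb; field; done.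
  exact: oner_neq0.
Qed.

Lemma caseC : c o2 o4 o4 = 0 -> c o1 o4 o4 = 0 -> c o2 o4 o3 = 0 -> c o1 o4 o3 = 0 ->
  Concl br (Nm l) (R0m R) (S0m l).
Proof.
move=> ha hb hy2 hy1.
have [m1 m2 m3] := minorsC Hl HN Hu hb ha hy1 hy2.
have [al [be [hE e1 e2 e3 hq]]] := choose_ab m1 m2 m3.
have hD : (1 : R) ^+ 2 + 0 ^+ 2 != 0 by rewrite expr0n /= addr0 expr1n oner_eq0.
apply: (step hD hE); first by split.
case=> Hl' HN' Hu'; apply: coreC => //.
- newc hD hE; rewrite ?ha ?hb ?hy1 ?hy2; field; done.
- newc hD hE; rewrite ?ha ?hb ?hy1 ?hy2; field; done.
- newc hD hE; rewrite ?ha ?hb ?hy1 ?hy2; field; done.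
- newc hD hE; rewrite ?ha ?hb ?hy1 ?hy2; field; done.
- rewrite -[X in _ = X]e2; newc hD hE; rewrite ?ha ?hb ?hy1 ?hy2; field; done.
- rewrite -[X in _ = X]e3; newc hD hE; rewrite ?ha ?hb ?hy1 ?hy2; field; done.
- rewrite -[X in _ = X]e1; newc hD hE; rewrite ?ha ?hb ?hy1 ?hy2; field; done.
- set br' := tbr _ br.
  have E1 : cc br' o2 o4 o2 = - be * c o2 o3 o2 + al * c o2 o4 o2.
    rewrite /br'; newc hD hE; rewrite ?ha ?hb ?hy1 ?hy2; field; done.
  have E2 : cc br' o2 o4 o1 = - be * c o2 o3 o1 + al * c o2 o4 o1.
    rewrite /br'; newc hD hE; rewrite ?ha ?hb ?hy1 ?hy2; field; done.
  have E3 : cc br' o1 o4 o2 = - be * c o1 o3 o2 + al * c o1 o4 o2.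
    rewrite /br'; newc hD hE; rewrite ?ha ?hb ?hy1 ?hy2; field; done.
  rewrite E1 E2 E3.
  set w := _ ^+ 2 + _.
  have -> : w = qf (c o2 o3 o2) (c o1 o3 o2) (c o2 o3 o1) (c o2 o4 o2) (c o1 o4 o2) (c o2 o4 o1) al be.
    by rewrite /w /qf; ring.
  exact: hq.
Qed.
End Cls.
Lemma std_classify br l : Hyp br (Nm l) (R0m R) (S0m l) -> Concl br (Nm l) (R0m R) (S0m l).
Proof.
case=> Hl HN Hu.
have [hAB|hAB] := eqVneq (cc br o2 o4 o4 ^+ 2 + cc br o1 o4 o4 ^+ 2) 0; last exact: caseA.
have ha : cc br o2 o4 o4 = 0.
  by have := sqr_ge0 (cc br o2 o4 o4); have := sqr_ge0 (cc br o1 o4 o4); nra.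
have hb : cc br o1 o4 o4 = 0.
  by have := sqr_ge0 (cc br o2 o4 o4); have := sqr_ge0 (cc br o1 o4 o4); nra.
have [hY|hY] := eqVneq (cc br o2 o4 o3 ^+ 2 + cc br o1 o4 o3 ^+ 2) 0; last exact: caseB.
have hy2 : cc br o2 o4 o3 = 0.
  by have := sqr_ge0 (cc br o2 o4 o3); have := sqr_ge0 (cc br o1 o4 o3); nra.
have hy1 : cc br o1 o4 o3 = 0.
  by have := sqr_ge0 (cc br o2 o4 o3); have := sqr_ge0 (cc br o1 o4 o3); nra.
exact: caseC.
Qed.

End F.

End Aux.
Import Aux.

Theorem theorem2p1 (R : realType) (br : 'rV[R]_4 -> 'rV[R]_4 -> 'rV[R]_4)
    (J Rm S : 'M[R]_4) :
  is_lie_bracket br -> unimodular br ->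
  gc_triple br J Rm S -> gc_type1 Rm ->
  exists (P : 'M[R]_4) (f : 'I_4 -> 'rV[R]_4) (lam : R),
    let e1 := row o1 P in let e2 := row o2 P in
    let e3 := row o3 P in let e4 := row o4 P in
    [/\ P \in unitmx /\
        (* f is the dual basis of the basis (e_i) = rows of P *)
        (forall i j, pair (f i) (row j P) = (i == j)%:R),
        (* J = lam (E11 + E22) + E34 - E43 *)
        [/\ e1 *m J = lam *: e1, e2 *m J = lam *: e2,
            e3 *m J = - e4 & e4 *m J = e3],
        (* R = (e1 /\ e2)^# :  R alpha = alpha(e1) e2 - alpha(e2) e1 *)
        (forall alpha, alpha *m Rm = pair alpha e1 *: e2 - pair alpha e2 *: e1),
        (* sigma = (1 + lam^2) (e^1 /\ e^2)_# *)
        (forall u, u *m S =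
           (1 + lam ^+ 2) *: (pair (f o1) u *: f o2 - pair (f o2) u *: f o1)) &
        [\/ (* U1 *)
            exists y q1 q2 : R,
              brackets br e1 e2 e3 e4 e1 0 0
                (2^-1 *: e3 - y *: e4 - q1 *: e1)
                (y *: e3 + 2^-1 *: e4 - q2 *: e1) 0,
            (* U2 *)
            exists y q1 q2 b1 b2 : R,
              brackets br e1 e2 e3 e4 0 0 0
                (- (y *: e4) - q1 *: e1)
                (y *: e3 - q2 *: e1)
                (b1 *: e1 + b2 *: e2)
          | (* U3 : [e4,e1] = p e1 + r e2, [e4,e2] = q e1 - p e2 *)
            exists b1 b2 p q r : R,
              [/\ brackets br e1 e2 e3 e4 0 0
                    (- (p *: e1 + r *: e2)) 0
                    (- (q *: e1 - p *: e2))
                    (b1 *: e1 + b2 *: e2)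
                & (`|p ^+ 2 + q * r| == 0) || (`|p ^+ 2 + q * r| == 1)]]].
Proof.
move=> Hl Hu Hgc Hr.
have [P [l [HP PJ PR PS]]] := nf Hgc Hr.
have H0 : Hyp br J Rm S by split => //; case: Hgc.
have H := @Hyp_transport _ _ _ _ _ _ HP H0.
rewrite PJ PR PS in H.
have C := std_classify H.
rewrite -PJ -PR -PS in C.
exact: (@Concl_transport _ _ _ _ _ _ HP Hl C).
Qed.
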